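(* Let $G$ be a graph with Hermitian adjacency matrix $A$ that has universal perfect state transfer, and let $u$ be a vertex of $G$. Then for all vertices $v \neq u$ we have $t_{u,v} < t_{u,u}$.
   Context: A (weighted) graph $G$ on $n$ vertices is given by its adjacency matrix $A$, an $n\times n$ complex matrix, here assumed Hermitian. The continuous-time quantum walk is $U(t)=\exp(-\mathtt{i} A t)$. For vertices $v,w$, let $T_{v,w}=\{t\in\mathbb{R}^{+} : |\langle w| e^{-\mathtt{i} A t}|v\rangle|=1\}$ be the set of (positive) times at which perfect state transfer occurs from $v$ to $w$. $G$ has universal perfect state transfer if $T_{v,w}\neq\emptyset$ for every pair of vertices $v,w$. In that case each $T_{v,w}$ is a discrete additive subgroup of $\mathbb{R}$ (intersected with the positive reals), so it has a smallest element, denoted $t_{v,w}=\min T_{v,w}$. *)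

(* Defs.v *)
From HB Require Import structures.
From mathcomp Require Import all_boot all_order all_algebra.
From mathcomp Require Import all_classical all_reals all_analysis.
From mathcomp Require Import complex.
Import numFieldNormedType.Exports.
Set Implicit Arguments. Unset Strict Implicit. Unset Printing Implicit Defensive.
Import Order.TTheory GRing.Theory Num.Theory.
Local Open Scope ring_scope.
Local Open Scope complex_scope.
Local Open Scope classical_set_scope.

Definition hermitian_mx (R : realType) (n : nat) (A : 'M[R[i]]_n) : Prop :=
  A = (map_mx (@conjc R) A)^T.

Definition exp_partial (R : realType) (n : nat) (B : 'M[R[i]]_n) (N : nat)
  : 'M[R[i]]_n :=
  \sum_(k < N) ((k`!)%:R)^-1 *: B ^+ k.

Definition is_expmx (R : realType) (n : nat) (B U : 'M[R[i]]_n) : Prop :=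
  forall j k : 'I_n,
    (fun N => complex.Re (exp_partial B N j k)) @ \oo --> complex.Re (U j k)
    /\ (fun N => complex.Im (exp_partial B N j k)) @ \oo --> complex.Im (U j k).

Definition walk_mx (R : realType) (n : nat) (A : 'M[R[i]]_n) (t : R) : 'M[R[i]]_n
  -> Prop := is_expmx (- ('i * t%:C) *: A).

Definition pst_times (R : realType) (n : nat) (A : 'M[R[i]]_n) (v w : 'I_n)
  : set R :=
  [set t | 0 < t /\ exists U, walk_mx A t U /\ `|U w v| = 1].

Definition universal_pst (R : realType) (n : nat) (A : 'M[R[i]]_n) : Prop :=
  forall v w : 'I_n, pst_times A v w !=set0.

Definition is_min_of (R : realType) (S : set R) (t : R) : Prop :=
  S t /\ forall s, S s -> t <= s.

(* Main.v *)
Require Import Defs.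
Set Warnings "-notation-overridden -ambiguous-paths -notation-incompatible-prefix".
From HB Require Import structures.
From mathcomp Require Import all_boot all_order all_algebra.
From mathcomp Require Import all_classical all_reals all_analysis.
From mathcomp Require Import complex.
From mathcomp Require Import ring lra zify.
Import Order.TTheory GRing.Theory Num.Theory.
Local Open Scope ring_scope.
Local Open Scope complex_scope.
Local Open Scope classical_set_scope.
Import numFieldNormedType.Exports.
Local Open Scope ring_scope.
Set Implicit Arguments. Unset Strict Implicit. Unset Printing Implicit Defensive.
Section NC.
Variable R : realType.
Implicit Types z w : R[i].

Definition nc z : R := let: a +i* b := z in Num.sqrt (a ^+ 2 + b ^+ 2).

Lemma nc_ge0 z : 0 <= nc z.
Proof. by case: z => a b; rewrite /nc sqrtr_ge0. Qed.

Lemma ncD z w : nc (z + w) <= nc z + nc w.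
Proof. exact: (@le_normcD R z w). Qed.

Lemma ncM z w : nc (z * w) = nc z * nc w.
Proof. exact: (@Normc.normcM R z w). Qed.

Lemma ncN z : nc (- z) = nc z.
Proof. exact: (@normcN R z). Qed.

Lemma nc0 : nc 0 = 0.
Proof. by rewrite /nc /= expr0n /= addr0 sqrtr0. Qed.

Lemma nc_eq0 z : nc z = 0 -> z = 0.
Proof. exact: (@Normc.eq0_normc R z). Qed.

Lemma ncB z w : nc (z - w) = nc (w - z).
Proof. by rewrite -ncN opprB. Qed.

Lemma nc_conj z : nc (z^*) = nc z.
Proof. by case: z => a b; rewrite /nc /= sqrrN. Qed.

Lemma normC z : `|z| = (nc z)%:C.
Proof. by case: z => a b; rewrite normc_def. Qed.

Lemma nc_real (x : R) : nc x%:C = `|x|.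
Proof. by rewrite /nc /= expr0n /= addr0 sqrtr_sqr. Qed.

Lemma nc_i : nc 'i = 1.
Proof. by rewrite /nc /= expr0n expr1n /= add0r sqrtr1. Qed.

Lemma Re_le z : `|complex.Re z| <= nc z.
Proof.
case: z => a b /=; rewrite -sqrtr_sqr ler_wsqrtr // lerDl sqr_ge0 //.
Qed.

Lemma Im_le z : `|complex.Im z| <= nc z.
Proof.
case: z => a b /=; rewrite -sqrtr_sqr ler_wsqrtr // lerDr sqr_ge0 //.
Qed.

Lemma nc_le z : nc z <= `|complex.Re z| + `|complex.Im z|.
Proof.
case: z => a b.
rewrite {1}(_ : a +i* b = a%:C + b%:C * 'i); last by simpc; congr (_ +i* _); ring.
apply: le_trans (ncD _ _) _.
by rewrite ncM nc_i mulr1 !nc_real /=.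
Qed.

Lemma conj_mul z : z^* * z = (nc z ^+ 2)%:C.
Proof.
case: z => a b; rewrite /nc sqr_sqrtr ?addr_ge0 ?sqr_ge0 //; simpc.
rewrite /real_complex_def; congr (_ +i* _); ring.
Qed.

Lemma nc_invnat k : nc ((k%:R : R[i])^-1) = (k%:R : R)^-1.
Proof.
rewrite -(rmorph_nat (real_complex R)) -fmorphV nc_real ger0_norm //.

Qed.

End NC.
Arguments nc {R}.
Section MN.
Variable R : realType.
Local Notation C := (R[i]).

Definition mn (p q : nat) (M : 'M[C]_(p, q)) : R := \sum_i \sum_j nc (M i j).

Arguments mn {p q}.
Lemma mn_ge0 p q (M : 'M[C]_(p, q)) : 0 <= mn M.
Proof. by apply: sumr_ge0 => i _; apply: sumr_ge0 => j _; exact: nc_ge0. Qed.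

Lemma mnD p q (M N : 'M[C]_(p, q)) : mn (M + N) <= mn M + mn N.
Proof.
rewrite /mn -big_split /=; apply: ler_sum => i _.
rewrite -big_split /=; apply: ler_sum => j _; rewrite mxE; exact: ncD.
Qed.

Lemma mnN p q (M : 'M[C]_(p, q)) : mn (- M) = mn M.
Proof.
by rewrite /mn; apply: eq_bigr => i _; apply: eq_bigr => j _; rewrite mxE ncN.
Qed.

Lemma mnB p q (M N : 'M[C]_(p, q)) : mn (M - N) = mn (N - M).
Proof. by rewrite -mnN opprB. Qed.

Lemma mnZ p q (c : C) (M : 'M[C]_(p, q)) : mn (c *: M) = nc c * mn M.
Proof.
rewrite /mn mulr_sumr; apply: eq_bigr => i _; rewrite mulr_sumr.
by apply: eq_bigr => j _; rewrite mxE ncM.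
Qed.

Lemma mn0 p q : mn (0 : 'M[C]_(p, q)) = 0.
Proof.
by rewrite /mn big1 // => i _; rewrite big1 // => j _; rewrite mxE nc0.
Qed.

Lemma sum_ge_term (I : finType) (F : I -> R) i0 :
  (forall i, 0 <= F i) -> F i0 <= \sum_i F i.
Proof.
move=> h; rewrite (bigD1 i0) //= lerDl; apply: sumr_ge0 => i _; exact: h.
Qed.

Lemma mn_entry {p q} (M : 'M[C]_(p, q)) (i : 'I_p) (j : 'I_q) : nc (M i j) <= mn M.
Proof.
have h1 := @sum_ge_term _ (fun i => \sum_j nc (M i j)) i.
have h2 := @sum_ge_term _ (fun j => nc (M i j)) j.
apply: le_trans (h1 _); first by apply: h2 => j'; exact: nc_ge0.
by move=> i'; apply: sumr_ge0 => j' _; exact: nc_ge0.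
Qed.

Lemma mn_le0 p q (M : 'M[C]_(p, q)) : mn M <= 0 -> M = 0.
Proof.
move=> h; apply/matrixP => i j; rewrite mxE; apply: nc_eq0.
by apply/eqP; rewrite eq_le nc_ge0 andbT (le_trans (mn_entry M i j)).
Qed.

Lemma nc_sum (I : Type) (r : seq I) (P : pred I) (F : I -> C) :
  nc (\sum_(i <- r | P i) F i) <= \sum_(i <- r | P i) nc (F i).
Proof.
elim/big_rec2: _ => [|i y z _ h]; first by rewrite nc0.
apply: le_trans; first exact: ncD.
by rewrite lerD2l.
Qed.

Lemma mn_sum (I : Type) (r : seq I) (P : pred I) p q (F : I -> 'M[C]_(p, q)) :
  mn (\sum_(i <- r | P i) F i) <= \sum_(i <- r | P i) mn (F i).
Proof.
elim/big_rec2: _ => [|i y z _ h]; first by rewrite mn0.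
apply: le_trans; first exact: mnD.
by rewrite lerD2l.
Qed.

Lemma mnM p q r (M : 'M[C]_(p, q)) (N : 'M[C]_(q, r)) :
  mn (M *m N) <= mn M * mn N.
Proof.
rewrite /mn mulr_suml; apply: ler_sum => i _.
have step : \sum_k nc ((M *m N) i k) <= \sum_k \sum_l nc (M i l) * nc (N l k).
  apply: ler_sum => k _; rewrite mxE; apply: le_trans; first exact: nc_sum.
  by apply: ler_sum => l _; rewrite ncM.
apply: (le_trans step).
rewrite exchange_big /= mulr_suml; apply: ler_sum => l _.
rewrite -mulr_sumr; apply: ler_wpM2l; first exact: nc_ge0.
have h1 := @sum_ge_term _ (fun l => \sum_k nc (N l k)) l.
by apply: h1 => l'; apply: sumr_ge0 => k _; exact: nc_ge0.
Qed.

Lemma mn_tr p q (M : 'M[C]_(p, q)) : mn (M^T) = mn M.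
Proof.
rewrite /mn exchange_big; apply: eq_bigr => i _; apply: eq_bigr => j _.
by rewrite mxE.
Qed.

Lemma mn_conj p q (M : 'M[C]_(p, q)) : mn (map_mx (@conjc R) M) = mn M.
Proof.
by rewrite /mn; apply: eq_bigr => i _; apply: eq_bigr => j _; rewrite mxE nc_conj.
Qed.

Variable n : nat.
Local Notation M := ('M[C]_n.+1).

Lemma mn1 : mn (1 : M) = n.+1%:R.
Proof.
rewrite /mn (eq_bigr (fun _ => 1)); first by rewrite sumr_const card_ord.
move=> i _; rewrite (bigD1 i) //= big1 ?addr0.
  by rewrite mxE eqxx nc_real normr1.
by move=> j /negPf ji; rewrite mxE eq_sym ji nc_real normr0.
Qed.

Lemma mnMr (X Y : M) : mn (X * Y) <= mn X * mn Y.
Proof. exact: mnM. Qed.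

Lemma mnX (X : M) k : mn (X ^+ k) <= n.+1%:R * mn X ^+ k.
Proof.
elim: k => [|k ih]; first by rewrite !expr0 mn1 mulr1.
rewrite exprSr (le_trans (mnMr _ _)) // exprSr mulrA.
by rewrite ler_wpM2r ?mn_ge0.
Qed.

End MN.
Arguments mn {R p q}.
Section Alg.
Variables (K : numFieldType) (V : algType K).
Local Notation c k := ((k`!%:R : K)^-1).

Definition Pg (X : V) N := \sum_(k < N) (k`!%:R : K)^-1 *: X ^+ k.
Definition Fg (X Y : V) (i j : nat) := (c i * c j) *: (X ^+ i * Y ^+ j).

Lemma Pg_prod X Y N :
  Pg X N * Pg Y N = \sum_(i < N) \sum_(j < N) Fg X Y i j.
Proof.
rewrite /Pg mulr_suml; apply: eq_bigr => i _; rewrite mulr_sumr.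
by apply: eq_bigr => j _; rewrite -scalerAl -scalerAr /Fg scalerA.
Qed.

Lemma cfact_bin N i : (i <= N)%N -> c i * c (N - i) = c N * 'C(N, i)%:R.
Proof.
move=> hi.
have h : (N`!%:R : K) = 'C(N, i)%:R * (i`!%:R * (N - i)`!%:R).
  by rewrite -!natrM bin_fact.
have h1 : ('C(N, i)%:R : K) != 0 by rewrite pnatr_eq0 -lt0n bin_gt0.
have h2 : (i`!%:R : K) != 0 by rewrite pnatr_eq0 -lt0n fact_gt0.
have h3 : ((N - i)`!%:R : K) != 0 by rewrite pnatr_eq0 -lt0n fact_gt0.
rewrite h; field.
by rewrite h1 h2 h3.
Qed.

Lemma diag_sum X Y (cXY : GRing.comm X Y) N :
  \sum_(i < N.+1) Fg X Y i (N - i) = c N *: (X + Y) ^+ N.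
Proof.
rewrite addrC exprDn_comm; last exact/esym.
rewrite scaler_sumr; apply: eq_bigr => i _.
rewrite /Fg -[_ *+ 'C(N, i)]scaler_nat scalerA -cfact_bin; last by rewrite -ltnS.
congr (_ *: _); apply/esym; apply: commrX; apply/esym; apply: commrX.
exact/esym.
Qed.

Lemma Pg_sum X Y (cXY : GRing.comm X Y) N :
  Pg (X + Y) N = \sum_(i < N) \sum_(j < N) (if (i + j < N)%N then Fg X Y i j else 0).
Proof.
elim: N => [|N ih]; first by rewrite /Pg !big_ord0.
rewrite /Pg big_ord_recr /= -/(Pg (X + Y) N) ih -diag_sum //.
have e : forall i j : 'I_N.+1,
    (if (i + j < N.+1)%N then Fg X Y i j else 0) =
    (if (i + j < N)%N then Fg X Y i j else 0) +
    (if (i + j == N)%N then Fg X Y i j else 0).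
  move=> i j; rewrite ltnS leq_eqVlt.
  case: eqP => [->|_] /=; first by rewrite ltnn add0r.
  by rewrite addr0.
rewrite (eq_bigr _ (fun i _ => eq_bigr _ (fun j _ => e i j))).
rewrite (eq_bigr _ (fun i _ => big_split _ _ _ _ _)) big_split /=.
congr (_ + _).
  apply/esym; rewrite big_ord_recr /= [X in _ + X]big1 ?addr0; last first.
    by move=> j _; rewrite ltnNge leq_addr.
  apply: eq_bigr => i _; rewrite big_ord_recr /= ltnNge leq_addl /= addr0.
  by [].
apply: eq_bigr => i _.
rewrite (bigD1 (inord (N - i))) //= big1 ?addr0.
  rewrite inordK; last by rewrite ltnS leq_subr.
  by rewrite subnKC ?eqxx // -ltnS.
move=> j hj; case: eqP => // hij; exfalso; move/eqP: hj; apply.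
apply/val_inj; rewrite /= inordK; first lia.
by rewrite ltnS leq_subr.
Qed.

Lemma Pg_diff X Y (cXY : GRing.comm X Y) N :
  Pg X N * Pg Y N - Pg (X + Y) N =
  \sum_(i < N) \sum_(j < N) (if (i + j < N)%N then 0 else Fg X Y i j).
Proof.
rewrite Pg_prod Pg_sum // -sumrB; apply: eq_bigr => i _.
rewrite -sumrB; apply: eq_bigr => j _.
by case: ifP => _; rewrite ?subrr ?subr0.
Qed.

End Alg.
Section RealHelpers.
Variable R : realType.

Lemma cvg_sum0 (I : Type) (r : seq I) (g : I -> nat -> R) :
  (forall i, g i @ \oo --> (0 : R)) ->
  (fun N => \sum_(i <- r) g i N) @ \oo --> (0 : R).
Proof.
move=> h; elim: r => [|i r ih].
  have -> : (fun N => \sum_(i <- [::]) g i N) = fun _ => (0 : R).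
    by apply/funext => N; rewrite big_nil.
  exact: cvg_cst.
have -> : (fun N => \sum_(j <- i :: r) g j N) =
  (fun N => g i N + \sum_(j <- r) g j N).
  by apply/funext => N; rewrite big_cons.
have := cvgD (h i) ih; rewrite addr0 => H; exact: H.
Qed.

Lemma le0_of_cvg (g : nat -> R) (c : R) :
  g @ \oo --> (0 : R) -> (forall N, c <= g N) -> c <= 0.
Proof.
move=> hg hc; rewrite leNgt; apply/negP => c0.
have := cvgr_lt (0 : R) hg c c0 => -[N _ hN].
have := hN N (leqnn N) => /=; by rewrite ltNge hc.
Qed.

Lemma squeeze0 (f g : nat -> R) :
  (forall N, 0 <= f N <= g N) -> g @ \oo --> (0 : R) -> f @ \oo --> (0 : R).
Proof.
move=> h hg; apply: (@squeeze_cvgr _ _ _ _ (fun _ => 0) g) => //.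
  by near=> N; exact: h.
exact: cvg_cst.
Unshelve. all: by end_near.
Qed.

Definition Pr (x : R) N := \sum_(k < N) (k`!%:R)^-1 * x ^+ k.

Lemma Pr_cvg x : Pr x @ \oo --> expR x.
Proof.
have -> : Pr x = series (exp_coeff x).
  apply/funext => N; rewrite /Pr /series /= big_mkord.
  by apply: eq_bigr => k _; rewrite /exp_coeff /= mulrC.
exact: is_cvg_series_exp_coeff.
Qed.

End RealHelpers.
Section Conv.
Variable R : realType.
Local Notation C := (R[i]).

Lemma dist_cvg0 (x : nat -> R) L : x @ \oo --> L -> (fun N => `|x N - L|) @ \oo --> (0 : R).
Proof.
move=> h; have h2 : (fun N => x N - L) @ \oo --> (L - L).
  by apply: cvgB => //; exact: cvg_cst.
rewrite subrr in h2.
have := cvg_norm h2; rewrite normr0 => H; exact: H.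
Qed.

Lemma cvg_of_dist (x e : nat -> R) L :
  e @ \oo --> (0 : R) -> (forall N, `|x N - L| <= e N) -> x @ \oo --> L.
Proof.
move=> he hx.
apply: (@squeeze_cvgr _ _ _ _ (fun N => L - e N) (fun N => L + e N)).
- by near=> N; rewrite -ler_distl; exact: hx.
- have h2 : (fun N => L - e N) @ \oo --> (L - 0).
    by apply: cvgB => //; exact: cvg_cst.
  by rewrite subr0 in h2.
- have h2 : (fun N => L + e N) @ \oo --> (L + 0).
    by apply: cvgD => //; exact: cvg_cst.
  by rewrite addr0 in h2.
Unshelve. all: by end_near.
Qed.

Lemma cvg0M (a b : nat -> R) : a @ \oo --> (0 : R) -> b @ \oo --> (0 : R) ->
  (fun N => a N * b N) @ \oo --> (0 : R).
Proof. by move=> ha hb; have := cvgM ha hb; rewrite mulr0 => H; exact: H. Qed.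

Lemma cvg0Mc (a : nat -> R) k : a @ \oo --> (0 : R) ->
  (fun N => a N * k) @ \oo --> (0 : R).
Proof.
move=> ha; have h2 : (fun N => a N * k) @ \oo --> (0 * k).
  by apply: cvgM => //; exact: cvg_cst.
by rewrite mul0r in h2.
Qed.

Lemma cvg0D (a b : nat -> R) : a @ \oo --> (0 : R) -> b @ \oo --> (0 : R) ->
  (fun N => a N + b N) @ \oo --> (0 : R).
Proof. by move=> ha hb; have := cvgD ha hb; rewrite addr0 => H; exact: H. Qed.

Lemma Re_sub (z w : C) : complex.Re (z - w) = complex.Re z - complex.Re w.
Proof. by case: z; case: w. Qed.

Lemma Im_sub (z w : C) : complex.Im (z - w) = complex.Im z - complex.Im w.
Proof. by case: z; case: w. Qed.

Variable n : nat.
Local Notation M := ('M[C]_n.+1).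

Definition conv (f : nat -> M) (U : M) := (fun N => mn (f N - U)) @ \oo --> (0 : R).

Lemma conv_unique f U V : conv f U -> conv f V -> U = V.
Proof.
move=> hU hV; apply/eqP; rewrite -subr_eq0; apply/eqP/mn_le0.
apply: (le0_of_cvg (cvg0D hU hV)) => N.
have -> : U - V = (f N - V) - (f N - U).
  by apply/esym; rewrite opprB addrC addrA subrK.
apply: le_trans; first exact: mnD.
by rewrite mnN addrC.
Qed.

Lemma conv_mul f g U V : conv f U -> conv g V -> conv (fun N => f N * g N) (U * V).
Proof.
move=> hf hg; rewrite /conv.
apply: (squeeze0 _ (cvg0D (cvg0D (cvg0M hf hg) (cvg0Mc (mn V) hf))
  (cvg0Mc (mn U) hg))) => N.
rewrite mn_ge0 /=.
have -> : f N * g N - U * V = (f N - U) * g N + U * (g N - V).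
  by rewrite mulrBl mulrBr addrA subrK.
have h1 : mn ((f N - U) * g N) <= mn (f N - U) * mn (g N) by exact: mnM.
have h2 : mn (g N) <= mn (g N - V) + mn V.
  by rewrite -{1}(subrK V (g N)); apply: le_trans; first exact: mnD.
have h3 : mn (U * (g N - V)) <= mn U * mn (g N - V) by exact: mnM.
have h4 : mn (f N - U) * mn (g N) <= mn (f N - U) * (mn (g N - V) + mn V).
  by apply: ler_wpM2l => //; exact: mn_ge0.
apply: le_trans; first exact: mnD.
rewrite mulrDr in h4.
apply: lerD; first exact: (le_trans h1 h4).
by rewrite mulrC.
Qed.

Lemma conv_near f g U : conv f U ->
  (fun N => mn (g N - f N)) @ \oo --> (0 : R) -> conv g U.
Proof.
move=> hf hgf; apply: (squeeze0 _ (cvg0D hgf hf)) => N.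
rewrite mn_ge0 /=.
have -> : g N - U = (g N - f N) + (f N - U) by rewrite addrA subrK.
exact: mnD.
Qed.

Lemma conv_ext f g U : (forall N, f N = g N) -> conv f U -> conv g U.
Proof. by move=> e; have -> : f = g by apply/funext. Qed.

End Conv.
Section Exist.
Variable R : realType.
Local Notation C := (R[i]).

Lemma Pr_ge0 (b : R) N : 0 <= b -> 0 <= Pr b N.
Proof.
move=> b0; apply: sumr_ge0 => k _; apply: mulr_ge0; last exact: exprn_ge0.
by rewrite invr_ge0.
Qed.

Lemma PrS (b : R) N : Pr b N.+1 = Pr b N + (N`!%:R)^-1 * b ^+ N.
Proof. by rewrite /Pr big_ord_recr. Qed.

Lemma Pr_le_exp (b : R) N : 0 <= b -> Pr b N <= expR b.
Proof.
move=> b0; have hc := @Pr_cvg R b.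
have nd : nondecreasing_seq (Pr b).
  apply/nondecreasing_seqP => k; rewrite PrS lerDl; apply: mulr_ge0.
    by rewrite invr_ge0.
  exact: exprn_ge0.
have := nondecreasing_cvgn_le nd (cvgP _ hc) N.
by rewrite (cvg_lim _ hc).
Qed.

Lemma cvg_dominated (x : nat -> R) (K b : R) : 0 <= b -> 0 <= K ->
  (forall N, `|x N.+1 - x N| <= K * ((N`!%:R)^-1 * b ^+ N)) ->
  (forall N, `|x N| <= K * Pr b N) -> cvgn x.
Proof.
move=> b0 K0 hS hB.
pose y N := x N + K * Pr b N.
have nd : nondecreasing_seq y.
  apply/nondecreasing_seqP => N; rewrite /y PrS mulrDr.
  have := hS N; rewrite ler_norml => /andP[h1 _].
  lra.
have ub : has_ubound (range y).
  exists (2 * K * expR b) => _ [N _ <-]; rewrite /y.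
  have := hB N; rewrite ler_norml => /andP[_ h2].
  have h3 : K * Pr b N <= K * expR b by apply: ler_wpM2l => //; exact: Pr_le_exp.
  lra.
have cy : cvgn y by exact: nondecreasing_is_cvgn.
have cP : cvgn (fun N => K * Pr b N).
  apply: cvgP; apply: cvgM; [exact: cvg_cst | exact: Pr_cvg].
have : cvgn (y - (fun N => K * Pr b N)) by exact: is_cvgB.
have -> : y - (fun N => K * Pr b N) = x.
  by apply/funext => N; rewrite /y /= addrK.
by [].
Qed.

Variable n : nat.
Local Notation M := ('M[C]_n.+1).

Lemma mn_term (B : M) k :
  mn ((k`!%:R : C)^-1 *: B ^+ k) <= n.+1%:R * ((k`!%:R)^-1 * mn B ^+ k).
Proof.
rewrite mnZ nc_invnat mulrCA; apply: ler_wpM2l; first by rewrite invr_ge0.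
exact: mnX.
Qed.

Lemma mn_Pg (B : M) N : mn (exp_partial B N) <= n.+1%:R * Pr (mn B) N.
Proof.
rewrite /exp_partial /Pr mulr_sumr.
apply: le_trans; first exact: mn_sum.
apply: ler_sum => k _; exact: mn_term.
Qed.

Lemma exp_partialS (B : M) N :
  exp_partial B N.+1 = exp_partial B N + (N`!%:R)^-1 *: B ^+ N.
Proof. by rewrite /exp_partial big_ord_recr. Qed.

Lemma expmx_conv (B U : M) : is_expmx B U -> conv (exp_partial B) U.
Proof.
move=> h; rewrite /conv.
apply: (@squeeze0 _ _ (fun N => \sum_i \sum_j
   (`|complex.Re (exp_partial B N i j) - complex.Re (U i j)| +
    `|complex.Im (exp_partial B N i j) - complex.Im (U i j)|))).
  move=> N; rewrite mn_ge0 /=; apply: ler_sum => i _; apply: ler_sum => j _.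
  by rewrite !mxE -Re_sub -Im_sub; exact: nc_le.
apply: cvg_sum0 => i; apply: cvg_sum0 => j; apply: cvg0D.
  exact: dist_cvg0 (h i j).1.
exact: dist_cvg0 (h i j).2.
Qed.

Lemma conv_expmx (B U : M) : conv (exp_partial B) U -> is_expmx B U.
Proof.
move=> h j k; split; apply: (cvg_of_dist h) => N;
  have e : exp_partial B N j k - U j k = (exp_partial B N - U) j k by rewrite !mxE.
  rewrite -Re_sub e; apply: le_trans; first exact: Re_le.
  exact: mn_entry.
rewrite -Im_sub e; apply: le_trans; first exact: Im_le.
exact: mn_entry.
Qed.

Lemma entry_bound (B : M) N (j k : 'I_n.+1) :
  nc ((exp_partial B N.+1) j k - (exp_partial B N) j k) <=
  n.+1%:R * ((N`!%:R)^-1 * mn B ^+ N).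
Proof.
rewrite exp_partialS mxE addrAC subrr add0r.
apply: le_trans; last exact: mn_term.
exact: mn_entry.
Qed.

Lemma entry_bound0 (B : M) N (j k : 'I_n.+1) :
  nc ((exp_partial B N) j k) <= n.+1%:R * Pr (mn B) N.
Proof.
apply: le_trans; last exact: mn_Pg.
exact: mn_entry.
Qed.

Lemma expmx_ex (B : M) : exists U, is_expmx B U.
Proof.
have hRe : forall j k, cvgn (fun N => complex.Re (exp_partial B N j k)).
  move=> j k; apply: (cvg_dominated (K := n.+1%:R) (b := mn B)) => //; first exact: mn_ge0.
    move=> N; rewrite -Re_sub; apply: le_trans; first exact: Re_le.
    exact: entry_bound.
  move=> N; apply: le_trans; first exact: Re_le.
  exact: entry_bound0.
have hIm : forall j k, cvgn (fun N => complex.Im (exp_partial B N j k)).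
  move=> j k; apply: (cvg_dominated (K := n.+1%:R) (b := mn B)) => //; first exact: mn_ge0.
    move=> N; rewrite -Im_sub; apply: le_trans; first exact: Im_le.
    exact: entry_bound.
  move=> N; apply: le_trans; first exact: Im_le.
  exact: entry_bound0.
exists (\matrix_(j, k) (limn (fun N => complex.Re (exp_partial B N j k)) +i*
                       limn (fun N => complex.Im (exp_partial B N j k)))).
by move=> j k; rewrite mxE /=; split; [exact: hRe | exact: hIm].
Qed.

End Exist.
Lemma cvg0_shift (R : realType) (g : nat -> R) :
  g @ \oo --> (0 : R) -> (fun N => g N.+1) @ \oo --> (0 : R).
Proof. by move=> h; rewrite -(cvg_shiftS g) in h. Qed.

Section Walk.
Variable R : realType.
Local Notation C := (R[i]).
Variable n : nat.
Local Notation M := ('M[C]_n.+1).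
Variable A : M.

Definition Xw (t : R) : M := - ('i * t%:C) *: A.

Definition E (t : R) : M := proj1_sig (cid (expmx_ex (Xw t))).

Lemma E_spec t : walk_mx A t (E t).
Proof. exact: (proj2_sig (cid (expmx_ex (Xw t)))). Qed.

Lemma E_conv t : conv (exp_partial (Xw t)) (E t).
Proof. exact: expmx_conv (E_spec t). Qed.

Lemma walkE t U : walk_mx A t U -> U = E t.
Proof. move=> h; exact: conv_unique (expmx_conv h) (E_conv t). Qed.

Lemma Xw_comm s t : GRing.comm (Xw s) (Xw t).
Proof.
by rewrite /GRing.comm /Xw -!scalerAl -!scalerAr !scalerA mulrC.
Qed.

Lemma XwD s t : Xw (s + t) = Xw s + Xw t.
Proof. by rewrite /Xw -scalerDl -opprD rmorphD mulrDr. Qed.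

Lemma mn_Xw t : mn (Xw t) = `|t| * mn A.
Proof. by rewrite /Xw mnZ ncN ncM nc_i mul1r nc_real. Qed.

Lemma Pg_Pr (x : R) N : Pg (x : R^o) N = Pr x N.
Proof. by []. Qed.

Lemma mn_Fg (Y Z : M) i j :
  mn (Fg Y Z i j) <= n.+1%:R ^+ 2 * Fg (mn Y : R^o) (mn Z) i j.
Proof.
rewrite /Fg mnZ ncM !nc_invnat.
change (((i`!%:R)^-1 * (j`!%:R)^-1) * mn (Y ^+ i * Z ^+ j) <=
  n.+1%:R ^+ 2 * (((i`!%:R)^-1 * (j`!%:R)^-1) * (mn Y ^+ i * mn Z ^+ j))).
rewrite mulrCA; apply: ler_wpM2l.
  by apply: mulr_ge0; rewrite invr_ge0.
apply: le_trans; first exact: mnMr.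
rewrite expr2 mulrACA; apply: ler_pM; try exact: mn_ge0; exact: mnX.
Qed.

Lemma E_add s t : E (s + t) = E s * E t.
Proof.
have h1 := conv_mul (E_conv s) (E_conv t).
apply/esym; apply: conv_unique h1 _.
apply: conv_near (E_conv (s + t)) _.
rewrite XwD.
set a := mn (Xw s); set b := mn (Xw t).
apply: (@squeeze0 _ _ (fun N => n.+1%:R ^+ 2 * (Pr a N * Pr b N - Pr (a + b) N))).
  move=> N; rewrite mn_ge0 /=.
  rewrite -!Pg_Pr.
  have -> : Pg (a : R^o) N * Pg (b : R^o) N - Pg (a + b : R^o) N =
    \sum_(i < N) \sum_(j < N) (if (i + j < N)%N then 0 else Fg (a : R^o) b i j).
    by apply: Pg_diff; exact: mulrC.

  have -> : exp_partial (Xw s) N * exp_partial (Xw t) N - exp_partial (Xw s + Xw t) N =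
    \sum_(i < N) \sum_(j < N) (if (i + j < N)%N then 0 else Fg (Xw s) (Xw t) i j).
    exact: (Pg_diff (Xw_comm s t)).
  apply: le_trans; first exact: mn_sum.
  rewrite mulr_sumr; apply: ler_sum => i _.
  apply: le_trans; first exact: mn_sum.
  rewrite mulr_sumr; apply: ler_sum => j _.
  case: ifP => _; first by rewrite mn0 mulr0.
  exact: mn_Fg.
have hl : (fun N => Pr a N * Pr b N - Pr (a + b) N) @ \oo --> (expR a * expR b - expR (a + b)).
  apply: cvgB; last exact: Pr_cvg.
  by apply: cvgM; exact: Pr_cvg.
rewrite expRD subrr in hl.
have := cvgM (cvg_cst (n.+1%:R ^+ 2 : R)) hl; rewrite mulr0 => H; exact: H.
Qed.

End Walk.
Section Walk2.
Variable R : realType.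
Local Notation C := (R[i]).
Variable n : nat.
Local Notation M := ('M[C]_n.+1).
Variable A : M.
Local Notation E := (E A).
Local Notation Xw := (Xw A).

Lemma Xw0 : Xw 0 = 0.
Proof. by rewrite /Xw mulr0 oppr0 scale0r. Qed.

Lemma exp_partial0 N : exp_partial (0 : M) N.+1 = 1.
Proof.
rewrite /exp_partial big_ord_recl /= big1 ?addr0.
  by rewrite expr0 fact0 invr1 scale1r.
by move=> k _; rewrite expr0n /= scaler0.
Qed.

Lemma E0 : E 0 = 1.
Proof.
have h := E_conv A 0; rewrite Xw0 in h.
apply: conv_unique h _.
rewrite /conv -cvg_shiftS /=.
have -> : (fun N => mn (exp_partial (0 : M) N.+1 - 1)) = fun _ => (0 : R).
  by apply/funext => N; rewrite exp_partial0 subrr mn0.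
exact: cvg_cst.
Qed.

Lemma mn_Pg1 (B : M) N :
  mn (exp_partial B N.+1 - 1) <= n.+1%:R * (Pr (mn B) N.+1 - 1).
Proof.
rewrite /exp_partial /Pr !big_ord_recl /= !expr0 fact0 !invr1 scale1r mulr1.
rewrite addrAC subrr add0r addrAC subrr add0r mulr_sumr.
apply: le_trans; first exact: mn_sum.
apply: ler_sum => k _; exact: mn_term.
Qed.

Lemma E_near1 h : mn (E h - 1) <= n.+1%:R * (expR (`|h| * mn A) - 1).
Proof.
set K := _ * _.
rewrite -subr_le0.
have hc := E_conv A h.
apply: (le0_of_cvg (cvg0_shift hc)) => N /=.
rewrite lerBlDr.
have e : E h - 1 = (E h - exp_partial (Xw h) N.+1) + (exp_partial (Xw h) N.+1 - 1).
  by rewrite addrA subrK.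
rewrite e; apply: le_trans; first exact: mnD.
rewrite mnB lerD2l /K.
apply: le_trans; first exact: mn_Pg1.
apply: ler_wpM2l => //; rewrite lerD2r -mn_Xw.
apply: Pr_le_exp; exact: mn_ge0.
Qed.

End Walk2.
Section Star.
Variable R : realType.
Local Notation C := (R[i]).
Variable n : nat.
Local Notation M := ('M[C]_n.+1).

Definition star (P : M) : M := (map_mx (@conjc R) P)^T.

Lemma starB P Q : star (P - Q) = star P - star Q.
Proof. by apply/matrixP => i j; rewrite !mxE rmorphB. Qed.

Lemma starD P Q : star (P + Q) = star P + star Q.
Proof. by apply/matrixP => i j; rewrite !mxE rmorphD. Qed.

Lemma star0 : star 0 = 0.
Proof. by apply/matrixP => i j; rewrite !mxE rmorph0. Qed.

Lemma star1 : star 1 = 1.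
Proof.
by apply/matrixP => i j; rewrite !mxE eq_sym conjc_nat.
Qed.

Lemma mn_star P : mn (star P) = mn P.
Proof. by rewrite /star mn_tr mn_conj. Qed.

Lemma starM P Q : star (P * Q) = star Q * star P.
Proof.
apply/matrixP => i j; rewrite !mxE rmorph_sum; apply: eq_bigr => k _.
by rewrite !mxE rmorphM mulrC.
Qed.

Lemma starX P k : star (P ^+ k) = star P ^+ k.
Proof.
elim: k => [|k ih]; first by rewrite !expr0 star1.
by rewrite exprSr starM ih exprS.
Qed.

Lemma starZ c P : star (c *: P) = (@conjc R c) *: star P.
Proof. by apply/matrixP => i j; rewrite !mxE rmorphM. Qed.

Lemma star_sum (I : Type) (r : seq I) (F : I -> M) :
  star (\sum_(i <- r) F i) = \sum_(i <- r) star (F i).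
Proof.
elim: r => [|x r ih]; first by rewrite !big_nil star0.
by rewrite !big_cons starD ih.
Qed.

Lemma star_partial B N : star (exp_partial B N) = exp_partial (star B) N.
Proof.
rewrite /exp_partial star_sum; apply: eq_bigr => k _.
by rewrite starZ starX conjc_inv conjc_nat.
Qed.

Variable A : M.
Hypothesis hA : hermitian_mx A.
Local Notation E := (E A).
Local Notation Xw := (Xw A).

Lemma star_Xw t : star (Xw t) = Xw (- t).
Proof.
rewrite /Xw starZ.
have -> : star A = A by rewrite /star -hA.
congr (_ *: _); rewrite rmorphN rmorphM rmorphN.
by simpc.
Qed.

Lemma star_E t : star (E t) = E (- t).
Proof.
apply: conv_unique (E_conv A (- t)).
have h := E_conv A t.
apply: (conv_ext (f := fun N => star (exp_partial (Xw t) N))).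
  by move=> N; rewrite star_partial star_Xw.
rewrite /conv; apply: (squeeze0 (g := fun N => mn (exp_partial (Xw t) N - E t))) => //.
by move=> N; rewrite -starB mn_star mn_ge0 lexx.
Qed.

Lemma unitary t : star (E t) * E t = 1.
Proof. by rewrite star_E -E_add addNr E0. Qed.

Lemma col_norm t (u : 'I_n.+1) : \sum_j nc (E t j u) ^+ 2 = 1.
Proof.
have := congr1 (fun P : M => P u u) (unitary t) => /=.
rewrite !mxE eqxx /= => h.
have : ((\sum_j nc (E t j u) ^+ 2)%:C : C) = 1.
  transitivity (\sum_j star (E t) u j * E t j u); last exact: h.
  rewrite rmorph_sum; apply: eq_bigr => j _.
  by rewrite !mxE conj_mul.
by move/(congr1 (@complex.Re R)).
Qed.

End Star.
Section Final.
Variable R : realType.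
Local Notation C := (R[i]).
Variable n : nat.
Local Notation M := ('M[C]_n.+1).
Variable A : M.
Hypothesis hA : hermitian_mx A.
Local Notation E := (E A).

Definition phi (h : R) : R := n.+1%:R * (expR (h * mn A) - 1).

Lemma pst_iff (u w : 'I_n.+1) t :
  pst_times A u w t <-> 0 < t /\ nc (E t w u) = 1.
Proof.
split.
  case=> t0 [U [hU1 hU2]]; split => //.
  rewrite -(walkE hU1); move: hU2; rewrite normC.
  by move/(congr1 (@complex.Re R)).
case=> t0 h; split => //; exists (E t); split; first exact: E_spec.
by rewrite normC h.
Qed.

Lemma col_one t (w u : 'I_n.+1) : nc (E t w u) = 1 ->
  forall j, j != w -> E t j u = 0.
Proof.
move=> h1 j jw; have := col_norm hA t u; rewrite (bigD1 w) //= h1 expr1n.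
move=> hs.
have hs2 : \sum_(j | j != w) nc (E t j u) ^+ 2 = 0 by apply: (addrI 1); rewrite addr0.
have h3 : forall j, j != w -> 0 <= nc (E t j u) ^+ 2 by move=> *; exact: sqr_ge0.
have h2 := psumr_eq0P h3 hs2.
by apply: nc_eq0; apply/eqP; rewrite -sqrf_eq0; apply/eqP; exact: h2.
Qed.

End Final.
Section Final2.
Variable R : realType.
Local Notation C := (R[i]).
Variable n : nat.
Local Notation M := ('M[C]_n.+1).
Variable A : M.
Hypothesis hA : hermitian_mx A.
Local Notation E := (E A).
Local Notation phi := (phi A).

Lemma phi_small eps : 0 < eps ->
  exists2 d : R, 0 < d & forall h, 0 <= h -> h <= d -> phi h <= eps.
Proof.
move=> e0.
have n0 : (0 : R) < n.+1%:R by rewrite ltr0n.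
have a0 : 0 <= mn A := mn_ge0 A.
have l0 : 1 < 1 + eps / n.+1%:R by rewrite ltrDl divr_gt0.
set L := ln (1 + eps / n.+1%:R).
have L0 : 0 < L by exact: ln_gt0.
have hp : 0 < mn A + 1 by lra.
exists (L / (mn A + 1)); first by rewrite divr_gt0.
move=> h h0 hd.
have h1 : h * mn A <= L.
  have : h * mn A <= L / (mn A + 1) * mn A by apply: ler_wpM2r.
  move/le_trans; apply.
  rewrite mulrAC ler_pdivrMr // ler_wpM2l ?lerDl //; exact: ltW.
have h2 : expR (h * mn A) <= 1 + eps / n.+1%:R.
  rewrite -[X in _ <= X](@lnK _ (1 + eps / n.+1%:R)) ?ler_expR //.
  by rewrite posrE (lt_trans _ l0).
rewrite /phi -(ler_pM2l n0) in h2.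
have e : n.+1%:R * (1 + eps / n.+1%:R) = n.+1%:R + eps.
  by rewrite mulrDr mulr1 mulrCA divff ?mulr1 // gt_eqF.
rewrite e in h2; rewrite /phi mulrBr mulr1; lra.
Qed.

Lemma entry_small h (j k : 'I_n.+1) : 0 <= h -> j != k -> nc (E h j k) <= phi h.
Proof.
move=> h0 jk.
have := E_near1 A h; rewrite ger0_norm // => hb.
apply: le_trans hb; apply: le_trans (mn_entry _ j k).
by rewrite !mxE (negPf jk) subr0.
Qed.

Lemma entry_prod_col (P Q : M) (v u : 'I_n.+1) :
  (forall j, j != u -> Q j u = 0) -> (P * Q) v u = P v u * Q u u.
Proof.
move=> hQ; rewrite !mxE (bigD1 u) //= big1 ?addr0 //.
by move=> l lu; rewrite hQ // mulr0.
Qed.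

Lemma ncX (z : C) k : nc (z ^+ k) = nc z ^+ k.
Proof.
elim: k => [|k ih]; first by rewrite !expr0 -(rmorph1 (real_complex R)) nc_real normr1.
by rewrite !exprS ncM ih.
Qed.

End Final2.
Section T.
Variable R : realType.
Variable n : nat.
Variable A : 'M[R[i]]_n.+1.
Local Notation E := (E A).
Lemma powE t (u : 'I_n.+1) : (forall j, j != u -> E t j u = 0) ->
  forall k j, E (k%:R * t) j u = if j == u then E t u u ^+ k else 0.
Proof.
move=> hz; elim=> [|k ih] j.
  rewrite mul0r E0 !mxE expr0; case: (j == u).
    exact: mulr1n.
  exact: mulr0n.
have -> : (k.+1%:R : R) * t = t + k%:R * t by rewrite mulrS mulrDl mul1r.
rewrite E_add.
move: ih; move: (E (k%:R * t)) => Q ih.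
rewrite entry_prod_col; last first.
  by move=> l lu; rewrite ih (negPf lu).
rewrite ih eqxx; case: eqP => [->|/eqP ju]; first by rewrite -exprS.
by rewrite hz // mul0r.
Qed.
End T.
Lemma nc_dist (R : realType) (a b : R[i]) : `|nc a - nc b| <= nc (a - b).
Proof.
have h1 : nc a <= nc (a - b) + nc b.
  by rewrite -{1}(subrK b a); exact: ncD.
have h2 : nc b <= nc (b - a) + nc a.
  by rewrite -{1}(subrK a b); exact: ncD.
rewrite ncB in h2; rewrite ler_norml; apply/andP; split; lra.
Qed.

Lemma close_one (R : realType) (a b : R[i]) eps :
  nc b = 1 -> nc (b - a) <= eps -> `|nc a - 1| <= eps.
Proof.
move=> hb hk; have := nc_dist a b; rewrite hb ncB => hh.
exact: le_trans hh hk.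
Qed.

Lemma eq1_eps (R : realType) (x : R) : (forall eps, 0 < eps -> `|x - 1| <= eps) -> x = 1.
Proof.
move=> h; apply/eqP; rewrite -subr_eq0 -normr_eq0; apply/negP => /negP hne.
have hp : 0 < `|x - 1| by rewrite normr_gt0 -normr_eq0.
have := h _ (divr_gt0 hp (ltr0n R 2)).
rewrite ler_pdivlMr ?ltr0n //; lra.
Qed.

Section Final3.
Variable R : realType.
Local Notation C := (R[i]).
Variable n : nat.
Local Notation M := ('M[C]_n.+1).
Variable A : M.
Hypothesis hA : hermitian_mx A.
Local Notation E := (E A).
Local Notation phi := (phi A).
Variable u v : 'I_n.+1.
Hypothesis vu : v != u.
Hypothesis hU : universal_pst A.

Lemma half_lt1 : (2^-1 : R) < 1.
Proof. by rewrite invf_lt1 ?ltr0n // ltr1n. Qed.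

Lemma half_gt0 : (0 : R) < 2^-1.
Proof. by rewrite invr_gt0 ltr0n. Qed.

Lemma lb_both : exists2 d : R, 0 < d &
  (forall t, pst_times A u v t -> d <= t) /\ (forall t, pst_times A u u t -> d <= t).
Proof.
have [d d0 hd] := phi_small A half_gt0.
have hl := half_lt1.
exists d => //; split.
  move=> t ht; rewrite leNgt; apply/negP => td.
  move/pst_iff: ht => [t0 h1].
  have h2 := entry_small A (ltW t0) vu; rewrite h1 in h2.
  have := hd t (ltW t0) (ltW td); lra.
move=> t ht; rewrite leNgt; apply/negP => td.
move/pst_iff: ht => [t0 h1].
have hz := col_one hA h1.
have [tau htau] := hU u v.
move/pst_iff: htau => [tau0 htau1].
have ex : exists m : nat, tau < m%:R * t.
  exists (Num.bound (tau / t)).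
  by rewrite -ltr_pdivrMr // archi_boundP // divr_ge0 // ltW.
case: (ex_minnP ex) => m hm hmin.
case: m hm hmin => [|k] hm hmin.
  by move: hm; rewrite mul0r ltNge (ltW tau0).
have hk : k%:R * t <= tau.
  rewrite leNgt; apply/negP => hlt; have := hmin k hlt; by rewrite ltnn.
have hS : (k.+1%:R : R) * t = t + k%:R * t by rewrite mulrS mulrDl mul1r.
rewrite hS in hm.
set h := tau - k%:R * t.
have h0 : 0 <= h by rewrite subr_ge0.
have hlt : h < t by rewrite /h ltrBlDr.
have hE : E tau = E h * E (k%:R * t) by rewrite -E_add subrK.
have hP := powE hz k.
move: hE hP; move: (E (k%:R * t)) => Q hE hP.
have hQ : forall j, j != u -> Q j u = 0 by move=> j ju; rewrite hP (negPf ju).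
have e1 : E tau v u = E h v u * Q u u by rewrite hE entry_prod_col.
rewrite e1 ncM hP eqxx ncX h1 expr1n mulr1 in htau1.
have h3 := entry_small A h0 vu; rewrite htau1 in h3.
have := hd h h0 (ltW (lt_trans hlt td)); lra.
Qed.

Lemma min_ex w : (exists t, pst_times A u w t) ->
  (exists2 d : R, 0 < d & forall t, pst_times A u w t -> d <= t) ->
  exists s, is_min_of (pst_times A u w) s.
Proof.
move=> ne [d d0 hd].
set S := pst_times A u w.
have hlb : has_lbound S by exists d => t ht; exact: hd.
have hs := ge_inf hlb.
have ds : d <= inf S by apply: lb_le_inf => // t ht; exact: hd.
exists (inf S); split => //; apply/pst_iff; split; first exact: lt_le_trans ds.
apply: eq1_eps => eps e0.
set s := inf S.
have hK : 0 < mn (E s) + 1 by have := mn_ge0 (E s); lra.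
have [eta eta0 heta] := phi_small A (divr_gt0 e0 hK).
have [t ht tlt] := inf_adherent eta0 (conj ne hlb).
have hst : s <= t := hs t ht.
move/pst_iff: ht => [_ ht1].
have hE : E t = E (t - s) * E s by rewrite -E_add subrK.
have e2 : (E (t - s) - 1) * E s = E t - E s by rewrite mulrBl mul1r hE.
have key : nc (E t w u - E s w u) <= eps.
  have -> : E t w u - E s w u = ((E (t - s) - 1) * E s) w u by rewrite e2 !mxE.
  apply: le_trans; first exact: mn_entry.
  apply: le_trans; first exact: mnMr.
  have hd0 : 0 <= t - s by rewrite subr_ge0.
  have hn := E_near1 A (t - s); rewrite ger0_norm // -/(phi (t - s)) in hn.
  have hte : t - s <= eta by rewrite lerBlDl; exact: ltW.
  have hp := heta (t - s) hd0 hte.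
  have h4 : mn (E (t - s) - 1) <= eps / (mn (E s) + 1) := le_trans hn hp.
  apply: le_trans; first by apply: ler_wpM2r h4; exact: mn_ge0.
  rewrite mulrAC ler_pdivrMr //.
  apply: ler_wpM2l; first exact: ltW.
  by rewrite lerDl ler01.
exact: close_one ht1 key.
Qed.

End Final3.
Lemma prod_one (R : realType) (n : nat) (P Q T : 'M[R[i]]_n.+1) (v u : 'I_n.+1) :
  T = P * Q -> nc (T v u) = 1 -> nc (Q u u) = 1 ->
  (forall j, j != u -> Q j u = 0) -> nc (P v u) = 1.
Proof.
move=> -> h1 h2 hz; move: h1; rewrite entry_prod_col // ncM h2 mulr1.
by [].
Qed.

Unset Implicit Arguments.
Local Open Scope ring_scope.
Local Open Scope complex_scope.

Theorem lemma1 (R : realType) (n : nat) (A : 'M[complex R]_n)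
  (hA : hermitian_mx A) (hU : universal_pst A) (u : 'I_n) :
  forall v : 'I_n, v != u ->
    exists t_uv t_uu : R,
      is_min_of (pst_times A u v) t_uv /\ is_min_of (pst_times A u u) t_uu
      /\ t_uv < t_uu.
Proof.
move: A hA hU u; case: n => [|n] A hA hU u; first by case: u.
move=> v vu.
have [d d0 [hdv hdu]] := lb_both hA vu hU.
have [s1 [hs1 hm1]] := min_ex (hU u v) (ex_intro2 _ _ d d0 hdv).
have [s2 [hs2 hm2]] := min_ex (hU u u) (ex_intro2 _ _ d d0 hdu).
exists s1, s2; split; first by split.
split; first by split.
rewrite ltNge; apply/negP => h21.
move/pst_iff: (hs1) => [t10 e1].
move/pst_iff: (hs2) => [t20 e2].
have hz := col_one hA e2.
case: (ltgtP s2 s1) h21 => // [hlt | heq] _.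
  have hE : E A s1 = E A (s1 - s2) * E A s2 by rewrite -E_add subrK.
  have e4 := prod_one hE e1 e2 hz.
  have hp : pst_times A u v (s1 - s2).
    by apply/pst_iff; split => //; rewrite subr_gt0.
  have := hm1 _ hp; rewrite lerBrDr gerDl leNgt t20 //.
rewrite heq in hz.
by move: e1; rewrite (hz v vu) nc0 => /esym/eqP; rewrite oner_eq0.
Qed.
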